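(* Let $\varphi:K\to L$ be a strong covering. Then (i) the multiset of eigenvalues of the combinatorial up-Laplacian $L^{up}_n(L)$ is contained in the multiset of eigenvalues of $L^{up}_n(K)$; and (ii) the multiset of eigenvalues of the normalized up-Laplacian $\Delta^{up}_n(L)$ is contained in the multiset of eigenvalues of $\Delta^{up}_n(K)$.
   Context: $S_j(K)$ is the set of $j$-faces. A simplicial map $\varphi:K\to L$ is a vertex map sending simplices to simplices; it is a covering map if $K$ is connected and for every simplex $G$ of $L$, $\varphi^{-1}(G)$ is a union of pairwise disjoint simplices $F_i$ with $\varphi|_{F_i}:F_i\to G$ bijective; a covering map is a strong covering if for every $G\in S_n(L)$ that is a facet of some $\bar G\in S_{n+1}(L)$ and every $F\in\varphi^{-1}(G)$ there is $\bar F\in S_{n+1}(K)$ with $F\subset\bar F$, $\varphi(\bar F)=\bar G$. For a weight function $w>0$ on faces, $C^j(X,\mathbb{R})$ (real cochains on oriented $j$-faces) has inner product $(f,g)=\sum_{F\in S_j}w(F)f([F])g([F])$, coboundary $(\delta_jf)([v_0,..,v_{j+1}])=\sum_i(-1)^if([v_0,..,\hat v_i,..,v_{j+1}])$, adjoint $(\delta_j^*\bar f)([F])=\sum_{\bar F\in S_{j+1},\bar F\supset F}\frac{w(\bar F)}{w(F)}\mathrm{sgn}([F],\partial[\bar F])\bar f([\bar F])$ with $\mathrm{sgn}([v_0,..,\hat v_i,..,v_{j+1}],\partial[v_0,..,v_{j+1}])=(-1)^i$, and up-Laplacian $\delta_n^*\delta_n$. $L^{up}_n(X)$ is the up-Laplacian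 for $w\equiv1$. $\Delta^{up}_n(X)$ is the up-Laplacian for the normalized weights $w(\bar F)=1$ for $\bar F\in S_{n+1}(X)$ and $w(F)=\deg F:=|\{\bar F\in S_{n+1}(X):F\subset\bar F\}|$ for $F\in S_n(X)$ with $\deg F\ge1$ (any positive weight on $n$-faces of degree $0$, on which the up-Laplacian does not depend). *)

(* Defs.v *)
From HB Require Import structures.
From mathcomp Require Import all_boot all_order all_algebra.
From mathcomp Require Import reals.
Set Implicit Arguments. Unset Strict Implicit. Unset Printing Implicit Defensive.
Import Order.TTheory GRing.Theory Num.Theory.
Local Open Scope ring_scope.

Definition is_complex (V : finType) (K : {set {set V}}) : Prop :=
  set0 \notin K /\
  (forall F G : {set V}, F \in K -> G \subset F -> G != set0 -> G \in K).

Definition faces (V : finType) (K : {set {set V}}) (j : nat) : {set {set V}} :=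
  [set F in K | #|F| == j.+1].

Definition connected_complex (V : finType) (K : {set {set V}}) : Prop :=
  (exists v : V, [set v] \in K) /\
  (forall u v : V, [set u] \in K -> [set v] \in K ->
     connect [rel x y | [set x; y] \in K] u v).

Definition simplicial_map (V W : finType) (K : {set {set V}}) (L : {set {set W}})
  (phi : V -> W) : Prop :=
  forall F, F \in K -> phi @: F \in L.

(* Covering map: K connected, and for every simplex G of L, the preimage
   phi^{-1}(G) (the subcomplex of simplices of K mapped into G) is a nonempty
   union of pairwise disjoint simplices F_i of K, each mapped bijectively onto G. *)
Definition covering_map (V W : finType) (K : {set {set V}}) (L : {set {set W}})
  (phi : V -> W) : Prop :=
  [/\ simplicial_map K L phi, connected_complex K &
   forall G, G \in L ->
     exists P : {set {set V}},
       [/\ P != set0,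
           (forall Fi, Fi \in P -> [/\ Fi \in K, {in Fi &, injective phi} & phi @: Fi = G]),
           (forall Fi Fj, Fi \in P -> Fj \in P -> Fi != Fj -> [disjoint Fi & Fj]) &
           (forall F, F \in K -> (phi @: F \subset G) <-> exists2 Fi, Fi \in P & F \subset Fi)]].

Definition strong_covering (V W : finType) (K : {set {set V}}) (L : {set {set W}})
  (phi : V -> W) : Prop :=
  covering_map K L phi /\
  forall (m : nat) (G Gb : {set W}), G \in faces L m -> Gb \in faces L m.+1 ->
    G \subset Gb ->
    forall F, F \in faces K m -> phi @: F = G ->
      exists2 Fb, Fb \in faces K m.+1 & F \subset Fb /\ phi @: Fb = Gb.

(* Orientation: every face is oriented by the increasing order of its vertices
   (order of enum_rank).  sgn([F], d[Fb]) = (-1)^i where the vertex of Fb not in F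
   is the i-th (from 0) vertex of Fb. *)
Definition orient_sgn (R : pzRingType) (V : finType) (F Fb : {set V}) : R :=
  (-1) ^+ #|[set u in Fb | [exists v in Fb :\: F, (enum_rank u < enum_rank v)%N]]|.

(* Matrix of the up-Laplacian delta_n^* delta_n on C^n(K,R) with weight w,
   in the basis of indicator cochains of the positively oriented n-faces:
   entry (F, F') = sum over (n+1)-faces Fb containing F and F' of
   w(Fb)/w(F) * sgn([F], d[Fb]) * sgn([F'], d[Fb]). *)
Definition up_laplacian (R : fieldType) (V : finType) (K : {set {set V}}) (n : nat)
  (w : {set V} -> R) : 'M[R]_(#|faces K n|) :=
  \matrix_(i, j)
    let F := enum_val i in let F' := enum_val j in
    \sum_(Fb in faces K n.+1 | (F :|: F') \subset Fb)
       w Fb / w F * orient_sgn R F Fb * orient_sgn R F' Fb.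

Definition face_deg (V : finType) (K : {set {set V}}) (n : nat) (F : {set V}) : nat :=
  #|[set Fb in faces K n.+1 | F \subset Fb]|.

Definition comb_up_laplacian (R : fieldType) (V : finType) (K : {set {set V}}) (n : nat) :=
  up_laplacian K n (fun _ => 1 : R).

(* Delta^up_n(K): w = 1 on (n+1)-faces, w = deg on n-faces (rows of degree-0
   faces vanish, the weight there being irrelevant). *)
Definition norm_up_laplacian (R : fieldType) (V : finType) (K : {set {set V}}) (n : nat) :=
  up_laplacian K n
    (fun X => if #|X| == n.+2 then 1 else (face_deg K n X)%:R : R).

Definition eigen_multiset_sub (R : fieldType) (p q : nat) (A : 'M[R]_p) (B : 'M[R]_q) : Prop :=
  forall lambda : R, (mup lambda (char_poly A) <= mup lambda (char_poly B))%N.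

(* Main.v *)
Require Import Defs.
From HB Require Import structures.
From mathcomp Require Import all_boot all_order all_algebra.
From mathcomp Require Import reals.
From mathcomp Require Import ring.
Set Implicit Arguments. Unset Strict Implicit. Unset Printing Implicit Defensive.
Import Order.TTheory GRing.Theory Num.Theory.

Section Lalg.
Local Open Scope ring_scope.
Variable F : fieldType.

Lemma char_poly_tr n (A : 'M[F]_n) : char_poly A^T = char_poly A.
Proof.
rewrite /char_poly -det_tr; congr (\det _).
rewrite /char_poly_mx (@raddfB _ _ trmx); congr (_ - _); [exact: tr_scalar_mx | by apply/matrixP=> i j; rewrite !mxE].
Qed.

Lemma char_poly_sim n (A U : 'M[F]_n) : U \in unitmx ->
  char_poly (U *m A *m invmx U) = char_poly A.
Proof.
move=> Uu; rewrite /char_poly /char_poly_mx.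
set U' := map_mx polyC U; set V' := map_mx polyC (invmx U).
have -> : 'X%:M - map_mx polyC (U *m A *m invmx U) =
    U' *m ('X%:M - map_mx polyC A) *m V'.
  rewrite mulmxBr mulmxBl !map_mxM /U' /V'; congr (_ - _).
  rewrite mul_mx_scalar -scalemxAl -map_mxM mulmxV // map_mx1 scalemx1 //.
rewrite det_mulmx det_mulmx mulrAC -det_mulmx -map_mxM mulmxV // map_mx1 det1 mul1r //.
Qed.

Lemma char_poly_lblock p r (A : 'M[F]_p) (C : 'M[F]_(r, p)) (D : 'M[F]_r) :
  char_poly (block_mx A 0 C D) = char_poly A * char_poly D.
Proof.
rewrite /char_poly /char_poly_mx (scalar_mx_block p r) map_block_mx opp_block_mx add_block_mx.
have -> : (0 : 'M[{poly F}]_(p,r)) + - map_mx (@polyC F) (0 : 'M[F]_(p, r)) = 0.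
  by apply/matrixP=> i j; rewrite !mxE oppr0 addr0.
by rewrite det_lblock.
Qed.

Lemma inv_sub_char p r (A : 'M[F]_p) (B : 'M[F]_(p + r)) (P : 'M[F]_(p, p + r)) :
  row_free P -> A *m P = P *m B ->
  exists D : 'M[F]_r, char_poly B = char_poly A * char_poly D.
Proof.
move=> rfP eAB.
have rkP : \rank P = p by apply/eqP.
pose L := col_ebase P; pose U := row_ebase P.
have ePid : pid_mx (\rank P) = pid_mx p :> 'M[F]_(p, p+r) by rewrite rkP.
have eP : P = L *m pid_mx p *m U by rewrite -ePid mulmx_ebase.
have Lu : L \in unitmx by apply: col_ebase_unit.
have Uu : U \in unitmx by apply: row_ebase_unit.
pose A' := invmx L *m A *m L; pose B' := U *m B *m invmx U.
have e' : A' *m pid_mx p = pid_mx p *m B'.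
  have h : L *m (A' *m pid_mx p) *m U = L *m (pid_mx p *m B') *m U.
    rewrite /A' /B' !mulmxA (mulmxV Lu) mul1mx -!mulmxA (mulVmx Uu) mulmx1.
    by rewrite (mulmxA L) -eP eAB !mulmxA -eP.
  by move: h => /(can_inj (mulmxK Uu)) /(can_inj (mulKmx Lu)).
have [e1 e2] : A' = ulsubmx B' /\ 0 = ursubmx B'.
  apply: eq_row_mx.
  move: e'; rewrite pid_mx_row mul_mx_row mulmx0 -(submxK B').
  rewrite block_mxEv mul_row_col mul1mx mul0mx addr0 mulmx1 -block_mxEv block_mxKul block_mxKur.
  by [].
have [D eB] : exists D, B' = block_mx A' 0 (dlsubmx B') D.
  by exists (drsubmx B'); rewrite e1 e2 submxK.
exists D; rewrite -(char_poly_sim B Uu) -/B' eB char_poly_lblock.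
by rewrite /A' -{2}(invmxK L) char_poly_sim // unitmx_inv.
Qed.

Lemma mup_sub p q (A : 'M[F]_p) (B : 'M[F]_q) (P : 'M[F]_(p, q)) :
  row_free P -> A *m P = P *m B ->
  forall x, (mup x (char_poly A) <= mup x (char_poly B))%N.
Proof.
move=> rfP eAB x.
have pq : (p <= q)%N by rewrite -(eqP rfP) rank_leq_col.
have e : q = (p + (q - p))%N by rewrite subnKC.
move: (q - p)%N e => r e; subst q.
have [D ->] := inv_sub_char rfP eAB.
have nz M : char_poly M != 0 :> {poly F} by rewrite monic_neq0 // char_poly_monic.
by rewrite mupM ?nz // leq_addr.
Qed.
End Lalg.

Section Comb.
Local Open Scope ring_scope.
Variables (R : fieldType) (V W : finType) (K : {set {set V}}) (L : {set {set W}}) (phi : V -> W) (n : nat).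
Hypotheses (hK : is_complex K) (hL : is_complex L) (hsc : strong_covering K L phi).

Lemma facesP (T : finType) (X : {set {set T}}) m F : (F \in faces X m) = (F \in X) && (#|F| == m.+1).
Proof. by rewrite inE. Qed.

Lemma inj_face F : F \in K -> {in F &, injective phi}.
Proof.
move=> HF; case: hsc => [[hs hconn hcov] _].
have [P [_ hP _ hsub]] := hcov _ (hs F HF).
have [Fi FiP sFFi] := (hsub F HF).1 (subxx _).
have [_ inj _] := hP Fi FiP.
by move=> x y xF yF; apply: inj; apply: (subsetP sFFi).
Qed.

Lemma imset_inj_sub (Fb F1 F2 : {set V}) : {in Fb &, injective phi} ->
  F1 \subset Fb -> F2 \subset Fb -> phi @: F1 = phi @: F2 -> F1 = F2.
Proof.
move=> inj s1 s2 e.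
have aux (A B : {set V}) : A \subset Fb -> B \subset Fb -> phi @: A = phi @: B -> A \subset B.
  move=> sA sB eAB; apply/subsetP=> x xA.
  have : phi x \in phi @: B by rewrite -eAB imset_f.
  case/imsetP=> y yB exy.
  by rewrite (inj x y (subsetP sA x xA) (subsetP sB y yB) exy).
by apply/eqP; rewrite eqEsubset (aux F1 F2) // (aux F2 F1).
Qed.

Lemma face_img m F : F \in faces K m -> phi @: F \in faces L m.
Proof.
rewrite !facesP => /andP[FK /eqP cF].
case: hsc => [[hs _ _] _].
apply/andP; split; first exact: hs.
by rewrite (card_in_imset (inj_face FK)) cF.
Qed.

Lemma face_nz (T : finType) (X : {set {set T}}) m F : F \in faces X m -> F != set0.
Proof. by rewrite facesP => /andP[_ /eqP cF]; rewrite -card_gt0 cF. Qed.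

Definition cof (F : {set V}) := [set Fb in faces K n.+1 | F \subset Fb].

Lemma cofaces_inj F : F \in faces K n -> {in cof F &, injective (fun Fb : {set V} => phi @: Fb)}.
Proof.
move=> HF Fb1 Fb2; rewrite !inE => /andP[/andP[K1 _] s1] /andP[/andP[K2 _] s2] e.
case: hsc => [[hs _ hcov] _].
have [P [_ hP hdis hsub]] := hcov _ (hs _ K1).
have [Fi FiP sFi] := (hsub Fb1 K1).1 (subxx _).
have : phi @: Fb2 \subset phi @: Fb1 by rewrite e.
move/((hsub Fb2 K2).1) => [Fj FjP sFj].
have eij : Fi = Fj.
  apply/eqP; apply/negP => /negP nij.
  have := hdis _ _ FiP FjP nij.
  have /set0Pn [x xF] := face_nz HF.
  have xi : x \in Fi by apply: (subsetP sFi); apply: (subsetP s1).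
  have xj : x \in Fj by apply: (subsetP sFj); apply: (subsetP s2).
  by move/disjointFr => /(_ x xi); rewrite xj.
have [_ inj _] := hP Fi FiP.
by apply: (imset_inj_sub inj sFi _ e); rewrite eij.
Qed.

Lemma cofaces_img F : F \in faces K n ->
  (fun Fb : {set V} => phi @: Fb) @: cof F = [set Gb in faces L n.+1 | phi @: F \subset Gb].
Proof.
move=> HF; apply/setP=> Gb; rewrite inE; apply/imsetP/andP.
  case=> Fb; rewrite inE => /andP[HFb sF] ->; split; first exact: face_img.
  exact: imsetS.
case=> HGb sG; case: hsc => [_ hlift].
have [Fb HFb [sF eb]] := hlift n _ Gb (face_img HF) HGb sG F HF erefl.
by exists Fb; rewrite // inE HFb.
Qed.

Lemma deg_eq F : F \in faces K n -> face_deg K n F = face_deg L n (phi @: F).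
Proof.
move=> HF; rewrite /face_deg -cofaces_img // card_in_imset //; exact: cofaces_inj.
Qed.

Lemma preim_face G : G \in faces L n -> exists2 F, F \in faces K n & phi @: F = G.
Proof.
move=> HG; case: hsc => [[hs _ hcov] _].
move: (HG); rewrite facesP => /andP[GL /eqP cG].
have [P [/set0Pn [Fi FiP] hP _ _]] := hcov _ GL.
have [FiK inj e] := hP Fi FiP.
by exists Fi => //; rewrite facesP FiK /= -cG -e (card_in_imset inj) eqxx.
Qed.

Lemma sub_face Fb G : Fb \in K -> G \in faces L n -> G \subset phi @: Fb ->
  exists2 F, F \in faces K n & F \subset Fb /\ phi @: F = G.
Proof.
move=> HFb HG sG; pose F := [set x in Fb | phi x \in G].
have sF : F \subset Fb by apply/subsetP=> x; rewrite inE => /andP[].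
have eF : phi @: F = G.
  apply/setP=> y; apply/imsetP/idP.
    by case=> x; rewrite inE => /andP[_ h] ->.
  move=> yG; have /imsetP [x xFb exy] := subsetP sG y yG.
  by exists x; rewrite // inE xFb -exy.
have inj := inj_face HFb.
have injF : {in F &, injective phi}.
  by move=> x y xF yF; apply: inj; apply: (subsetP sF).
exists F => //; move: HG; rewrite !facesP => /andP[_ /eqP cG].
rewrite -cG -eF card_in_imset // eqxx andbT.
case: hK => _ hcl; apply: (hcl Fb) => //.
by rewrite -card_gt0 -(card_in_imset injF) eF cG.
Qed.
Definition sg (u v : V) : R :=
  if (enum_rank u < enum_rank v)%N && (enum_rank (phi v) < enum_rank (phi u))%N then -1 else 1.
Definition eps (F : {set V}) : R := \prod_(u in F) \prod_(v in F) sg u v.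

Lemma sg_sq u v : sg u v * sg u v = 1.
Proof. by rewrite /sg; case: ifP => _; rewrite ?mulrNN mulr1. Qed.

Lemma eps_sq (F : {set V}) : eps F * eps F = 1.
Proof.
rewrite /eps -big_split big1 // => u _; rewrite -big_split big1 // => v _; exact: sg_sq.
Qed.

Lemma orient_prod (T : finType) (F Fb : {set T}) x : Fb :\: F = [set x] ->
  orient_sgn R F Fb = \prod_(u in Fb) (if (enum_rank u < enum_rank x)%N then -1 else 1).
Proof.
move=> e; rewrite /orient_sgn -prodr_const big_mkcond [RHS]big_mkcond /=.
apply: eq_bigr => u _; rewrite inE e.
have -> : [exists v in [set x], (enum_rank u < enum_rank v)%N] = (enum_rank u < enum_rank x)%N.
  apply/existsP/idP => [[v /andP[/set1P -> h]] // | h].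
  by exists x; rewrite set11.
by case: (u \in Fb); case: (_ < _)%N.
Qed.

Lemma prodU1 (f : V -> R) x (F : {set V}) : x \notin F ->
  \prod_(v in x |: F) f v = f x * \prod_(v in F) f v.
Proof. exact: big_setU1. Qed.

Lemma eps_add (F : {set V}) x : x \notin F -> eps (x |: F) = eps F * \prod_(u in F) (sg x u * sg u x).
Proof.
move=> xF; rewrite /eps.
have e0 : \prod_(u in x |: F) \prod_(v in x |: F) sg u v =
    \prod_(u in x |: F) (sg u x * \prod_(v in F) sg u v).
  by apply: eq_bigr => u _; exact: prodU1.
have e1 := prodU1 (fun u => sg u x * \prod_(v in F) sg u v) xF.
rewrite e0 e1 /=.
have -> : sg x x = 1 by rewrite /sg ltnn.
rewrite !big_split /=; ring.
Qed.

Lemma ltn_asym' m k : (m < k)%N -> (k < m)%N = false.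
Proof. by move=> h; rewrite ltnNge ltnW. Qed.

Lemma sign_key (F Fb : {set V}) : {in Fb &, injective phi} -> F \subset Fb -> #|Fb| = #|F|.+1 ->
  orient_sgn R F Fb = eps F * eps Fb * orient_sgn R (phi @: F) (phi @: Fb).
Proof.
move=> inj sF cFb.
have : #|Fb :\: F| == 1%N by rewrite cardsDS // cFb subSnn.
case/cards1P => x ex.
have : x \in Fb :\: F by rewrite ex set11.
rewrite inE => /andP[xF xFb].
have eFb : Fb = x |: F.
  apply/setP => y; rewrite inE; case: (boolP (y \in F)) => yF.
    by rewrite orbT (subsetP sF).
  have := ex; move/setP/(_ y); rewrite !inE (negbTE yF) /= => ->.
  by rewrite orbF.
have pxF : phi x \notin phi @: F.
  apply/imsetP => [[y yF exy]]; have := inj x y xFb (subsetP sF y yF) exy => e.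
  by move: xF; rewrite e yF.
have eL : phi @: Fb :\: phi @: F = [set phi x].
  rewrite eFb imsetU1; apply/setP => y; rewrite !inE.
  by case: eqP => [->|_] /=; [rewrite pxF | case: (y \in phi @: F)].
have injF : {in F &, injective phi}.
  by move=> a b aF bF; apply: inj; apply: (subsetP sF).
rewrite (orient_prod ex) (orient_prod eL) eFb eps_add // big_setU1 //= ltnn.
rewrite imsetU1 big_setU1 //= ltnn (big_imset _ injF) /=.
rewrite !mul1r mulrA eps_sq mul1r -big_split; apply: eq_bigr => u uF.
have ux : u != x by apply: contraNneq xF => <-.
have pux : phi u != phi x by apply: contraNneq pxF => <-; apply: imset_f.
have ru : (enum_rank u : nat) != enum_rank x.
  by apply: contra ux => /eqP /ord_inj /enum_rank_inj ->.
have rpu : (enum_rank (phi u) : nat) != enum_rank (phi x).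
  by apply: contra pux => /eqP /ord_inj /enum_rank_inj ->.
rewrite /sg.
case: (ltngtP (enum_rank u) (enum_rank x)) => h1; last by rewrite h1 eqxx in ru.
  all: case: (ltngtP (enum_rank (phi u)) (enum_rank (phi x))) => h2;
    try by rewrite h2 eqxx in rpu.
  all: by rewrite ?h1 ?h2 ?(ltn_asym' h1) ?(ltn_asym' h2) /= ?(mulr1, mul1r, mulrN, mulNr, opprK).
Qed.
Definition lapf (T : finType) (X : {set {set T}}) (w : {set T} -> R) (F F' : {set T}) : R :=
  \sum_(Fb in faces X n.+1 | (F :|: F') \subset Fb)
     w Fb / w F * orient_sgn R F Fb * orient_sgn R F' Fb.

Lemma up_lapE (T : finType) (X : {set {set T}}) (w : {set T} -> R) :
  up_laplacian X n w = \matrix_(i, j) lapf X w (enum_val i) (enum_val j).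
Proof. by []. Qed.

Definition qf (F : {set V}) (G : {set W}) : R := if phi @: F == G then eps F else 0.

Lemma sum_cond (T : finType) (A : {set T}) (P : pred T) (f : T -> R) :
  \sum_(x in [set x in A | P x]) f x = \sum_(x in A) (if P x then f x else 0).
Proof.
rewrite big_mkcond [RHS]big_mkcond; apply: eq_bigr => x _; rewrite inE.
by case: (x \in A); case: (P x).
Qed.

Lemma inner (wK : {set V} -> R) F G Fb :
  F \in faces K n -> G \in faces L n -> Fb \in faces K n.+1 ->
  \sum_(F' in faces K n) (if (F :|: F') \subset Fb then
     wK Fb / wK F * orient_sgn R F Fb * orient_sgn R F' Fb * qf F' G else 0)
  = if (F \subset Fb) && (G \subset phi @: Fb) then
     wK Fb / wK F * orient_sgn R F Fb * (eps Fb * orient_sgn R G (phi @: Fb)) else 0.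
Proof.
move=> HF HG HFb.
have FbK : Fb \in K by move: HFb; rewrite facesP => /andP[].
have inj := inj_face FbK.
have cFb : #|Fb| = n.+2 by move: HFb; rewrite facesP => /andP[_ /eqP].
case: (boolP (F \subset Fb)) => sF /=; last first.
  by apply: big1 => F' _; rewrite subUset (negbTE sF).
case: (boolP (G \subset phi @: Fb)) => sG; last first.
  apply: big1 => F' _; rewrite subUset sF /=; case: ifP => // sF'.
  rewrite /qf; case: eqP => [e|_]; last by rewrite mulr0.
  by move: sG; rewrite -e (imsetS phi sF').
have [Fs HFs [sFs eFs]] := sub_face FbK HG sG.
rewrite (bigD1 Fs) //= subUset sF sFs /= big1 ?addr0; last first.
  move=> F' /andP[HF' nF']; rewrite subUset sF /=; case: ifP => // sF'.
  rewrite /qf; case: eqP => [e|_]; last by rewrite mulr0.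
  by case/eqP: nF'; apply: (imset_inj_sub inj sF' sFs); rewrite e eFs.
rewrite /qf eFs eqxx.
have cFs : #|Fb| = #|Fs|.+1 by move: HFs; rewrite facesP cFb => /andP[_ /eqP ->].
rewrite (sign_key inj sFs cFs) eFs.
transitivity (wK Fb / wK F * orient_sgn R F Fb *
   ((eps Fs * eps Fs) * eps Fb * orient_sgn R G (phi @: Fb))); first by ring.
by rewrite eps_sq mul1r.
Qed.

Lemma key (wK : {set V} -> R) (wL : {set W} -> R) F G :
  (forall Fb, Fb \in faces K n.+1 -> wK Fb = wL (phi @: Fb)) ->
  (forall F, F \in faces K n -> wK F = wL (phi @: F)) ->
  F \in faces K n -> G \in faces L n ->
  \sum_(F' in faces K n) lapf K wK F F' * qf F' G = eps F * lapf L wL (phi @: F) G.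
Proof.
move=> hw1 hw0 HF HG.
under eq_bigr => F' _ do rewrite /lapf big_distrl /= big_mkcondr /=.
rewrite exchange_big /=.
under eq_bigr => Fb HFb do rewrite (inner wK HF HG HFb).
pose h (Gb : {set W}) : R := wL Gb / wL (phi @: F) * orient_sgn R (phi @: F) Gb * orient_sgn R G Gb.
transitivity (\sum_(Fb in faces K n.+1) (if F \subset Fb then
    eps F * (if G \subset phi @: Fb then h (phi @: Fb) else 0) else 0)).
  apply: eq_bigr => Fb HFb.
  case: (boolP (F \subset Fb)) => sF //=; case: (boolP (G \subset phi @: Fb)) => sG /=; last first.
    by rewrite mulr0.
  have FbK : Fb \in K by move: HFb; rewrite facesP => /andP[].
  have cF : #|Fb| = #|F|.+1.
    by move: HFb HF; rewrite !facesP => /andP[_ /eqP ->] /andP[_ /eqP ->].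
  rewrite (sign_key (inj_face FbK) sF cF) /h hw1 // hw0 //.
  transitivity (wL (phi @: Fb) / wL (phi @: F) *
    (eps F * (eps Fb * eps Fb) * orient_sgn R (phi @: F) (phi @: Fb)) *
     orient_sgn R G (phi @: Fb)); first by ring.
  by rewrite eps_sq mulr1; ring.
rewrite -sum_cond -big_distrr /=.
rewrite -(big_imset (fun Gb : {set W} => if G \subset Gb then h Gb else 0) (cofaces_inj HF)) /=.
rewrite cofaces_img // sum_cond /lapf big_mkcondr /=.
congr (_ * _); apply: eq_bigr => Gb _; rewrite subUset.
by case: (_ \subset _); case: (_ \subset _).
Qed.
Definition Qm : 'M[R]_(#|faces K n|, #|faces L n|) :=
  \matrix_(i, j) qf (enum_val i) (enum_val j).

Lemma intertwine (wK : {set V} -> R) (wL : {set W} -> R) :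
  (forall Fb, Fb \in faces K n.+1 -> wK Fb = wL (phi @: Fb)) ->
  (forall F, F \in faces K n -> wK F = wL (phi @: F)) ->
  up_laplacian K n wK *m Qm = Qm *m up_laplacian L n wL.
Proof.
move=> hw1 hw0; rewrite !up_lapE; apply/matrixP => i j; rewrite !mxE.
under eq_bigr => k _ do rewrite !mxE.
under [RHS]eq_bigr => k _ do rewrite !mxE.
rewrite -(big_enum_val (A := [in faces K n]) (fun F' => lapf K wK (enum_val i) F' * qf F' (enum_val j))).
rewrite -(big_enum_val (A := [in faces L n]) (fun G' => qf (enum_val i) G' * lapf L wL G' (enum_val j))).
rewrite (key hw1 hw0 (enum_valP i) (enum_valP j)).
have HF := enum_valP i.
rewrite (bigD1 (phi @: enum_val i)) ?face_img //= big1 ?addr0.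
  by rewrite /qf eqxx.
move=> G' /andP[_ nG']; rewrite /qf; case: eqP => [e|_]; last by rewrite mul0r.
by rewrite e eqxx in nG'.
Qed.

Lemma Qm_free : row_free Qm^T.
Proof.
pose pre (G : {set W}) : {set V} := odflt set0 [pick F in faces K n | phi @: F == G].
have preP G : G \in faces L n -> pre G \in faces K n /\ phi @: pre G = G.
  move=> HG; rewrite /pre; case: pickP => [F /andP[HF /eqP e] | none] //=.
  have [F HF e] := preim_face HG.
  by have := none F; rewrite HF e eqxx.
apply/row_freeP.
exists (\matrix_(k, j) (if enum_val k == pre (enum_val j) then eps (enum_val k) else 0)).
apply/matrixP => j j'; rewrite !mxE.
under eq_bigr => k _ do rewrite !mxE.
rewrite -(big_enum_val (A := [in faces K n]) (fun F => qf F (enum_val j) *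
   (if F == pre (enum_val j') then eps F else 0))).
have [Hp ep] := preP _ (enum_valP j').
rewrite (bigD1 (pre (enum_val j'))) //= big1 ?addr0; last first.
  by move=> F /andP[_ /negbTE ->]; rewrite mulr0.
rewrite eqxx /qf ep.
rewrite (inj_eq enum_val_inj) eq_sym.
by case: eqP => _; rewrite ?eps_sq ?mul0r.
Qed.

Lemma main_w (wK : {set V} -> R) (wL : {set W} -> R) :
  (forall Fb, Fb \in faces K n.+1 -> wK Fb = wL (phi @: Fb)) ->
  (forall F, F \in faces K n -> wK F = wL (phi @: F)) ->
  eigen_multiset_sub (up_laplacian L n wL) (up_laplacian K n wK).
Proof.
move=> hw1 hw0 x.
have e := intertwine hw1 hw0.
have e' : (up_laplacian L n wL)^T *m Qm^T = Qm^T *m (up_laplacian K n wK)^T.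
  by rewrite -!trmx_mul e.
by rewrite -char_poly_tr -[char_poly (up_laplacian K n wK)]char_poly_tr; apply: (mup_sub Qm_free e').
Qed.
Lemma comb_part : eigen_multiset_sub (comb_up_laplacian R L n) (comb_up_laplacian R K n).
Proof. by apply: main_w. Qed.

Lemma norm_part : eigen_multiset_sub (norm_up_laplacian R L n) (norm_up_laplacian R K n).
Proof.
rewrite /norm_up_laplacian; apply: main_w.
  move=> Fb HFb; have HG := face_img HFb.
  by move: HFb HG; rewrite !facesP => /andP[_ /eqP ->] /andP[_ /eqP ->]; rewrite eqxx.
move=> F HF; have HG := face_img HF; have := deg_eq HF.
move: HF HG; rewrite !facesP => /andP[_ /eqP ->] /andP[_ /eqP ->] ->.
have -> : (n.+1 == n.+2) = false by rewrite eqn_leq ltnn andbF.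
by [].
Qed.
End Comb.

Theorem corollary3p6 (R : realType) (V W : finType)
  (K : {set {set V}}) (L : {set {set W}}) (phi : V -> W) (n : nat) :
  is_complex K -> is_complex L -> strong_covering K L phi ->
  eigen_multiset_sub (comb_up_laplacian R L n) (comb_up_laplacian R K n) /\
  eigen_multiset_sub (norm_up_laplacian R L n) (norm_up_laplacian R K n).
Proof.
move=> hK hL hsc.
split.
  by apply: (@comb_part R V W K L phi n).
by apply: (@norm_part R V W K L phi n).
Qed.
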